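(* Let $R$ be a commutative Noetherian ring of prime characteristic $p$ and $G$ an $x$-torsion-free left $R[x,f]$-module. Let $N:=\operatorname{ann}_G(\mathfrak{b}R[x,f])$ be a non-zero special annihilator submodule of $G$, where $\mathfrak{b}\in\mathcal{I}(G)$ satisfies $\operatorname{grann}_{R[x,f]}N=\mathfrak{b}R[x,f]$, and let $\mathfrak{b}=\mathfrak{p}_1\cap\dots\cap\mathfrak{p}_t$ be the minimal primary decomposition of the radical ideal $\mathfrak{b}$. Suppose $t>1$ and $\{1,\dots,t\}=U\cup V$ with $U,V$ non-empty and disjoint; set $\mathfrak{a}=\bigcap_{i\in U}\mathfrak{p}_i$, $\mathfrak{c}=\bigcap_{i\in V}\mathfrak{p}_i$ and $L:=\operatorname{ann}_G(\mathfrak{a}R[x,f])$. Then (i) $0\subsetneq L\subsetneq N$; (ii) $N/L=\operatorname{ann}_{G/L}(\mathfrak{c}R[x,f])$, and $\operatorname{grann}_{R[x,f]}(N/L)=\mathfrak{c}R[x,f]$ (so $\mathfrak{c}\in\mathcal{I}(G/L)$ corresponds to $N/L$); (iii) $\operatorname{grann}_{R[x,f]}L=\mathfrak{a}R[x,f]$, so $\mathfrak{a}\in\mathcal{I}(G)$ corresponds to $L$.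
   Context: $R[x,f]$ is the Frobenius skew polynomial ring: free left $R$-module on $(x^i)_{i\ge0}$, $xr=r^px$. For an ideal $\mathfrak{a}$ of $R$, $\mathfrak{a}R[x,f]=\bigoplus_{n\ge0}\mathfrak{a}x^n$. $x$-torsion-free: $xg=0\Rightarrow g=0$. $\operatorname{ann}_M\mathfrak{B}$ is the set of elements of $M$ killed by $\mathfrak{B}$; special annihilator submodules are $\operatorname{ann}_M\mathfrak{B}$ for graded two-sided ideals $\mathfrak{B}$. $\operatorname{grann}N$ is the set of $\sum r_ix^i$ with each $r_ix^i$ annihilating $N$. For $x$-torsion-free $G$, $\mathcal{I}(G)$ is the set of ideals $\mathfrak{b}$ with $\operatorname{grann}N=\mathfrak{b}R[x,f]$ for some $R[x,f]$-submodule $N$ of $G$ (these ideals are radical). For a special annihilator submodule $L$ of $G$, $G/L$ is $x$-torsion-free. *)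

(* Defs.v *)
From HB Require Import structures.
From mathcomp Require Import all_boot all_order all_algebra.
Set Implicit Arguments. Unset Strict Implicit. Unset Printing Implicit Defensive.
Import GRing.Theory.
Local Open Scope ring_scope.

Section Defs.
Variable R : comNzRingType.

Definition is_ideal (I : R -> Prop) : Prop :=
  I 0 /\ (forall a b, I a -> I b -> I (a + b)) /\ (forall r a, I a -> I (r * a)).

Definition is_prime_ideal (P : R -> Prop) : Prop :=
  is_ideal P /\ ~ P 1 /\ (forall a b, P (a * b) -> P a \/ P b).

Definition noetherian_ring : Prop :=
  forall I : nat -> R -> Prop, (forall n, is_ideal (I n)) ->
    (forall n r, I n r -> I n.+1 r) ->
    exists m, forall n r, (m <= n)%N -> I n r -> I m r.

(* A left R[x,f]-module (f = Frobenius r |-> r^p) is an R-module G together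
   with the action xF : G -> G of x, which is additive and satisfies
   x (r g) = r^p (x g), i.e. x r = r^p x. *)
Definition frob_skew_action (p : nat) (G : lmodType R) (xF : G -> G) : Prop :=
  (forall g h, xF (g + h) = xF g + xF h) /\
  (forall (r : R) g, xF (r *: g) = r ^+ p *: xF g).

Definition x_torsion_free (G : lmodType R) (xF : G -> G) : Prop :=
  forall g, xF g = 0 -> g = 0.

Definition is_submodule (G : lmodType R) (xF : G -> G) (N : G -> Prop) : Prop :=
  N 0 /\ (forall g h, N g -> N h -> N (g + h)) /\
  (forall (r : R) g, N g -> N (r *: g)) /\ (forall g, N g -> N (xF g)).

(* ann_G (b R[x,f]) : elements killed by every r x^n with r in b
   (b R[x,f] = (+)_n b x^n). *)
Definition ann_bRxf (G : lmodType R) (xF : G -> G) (b : R -> Prop) : G -> Prop :=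
  fun g => forall (n : nat) (r : R), b r -> r *: iter n xF g = 0.

(* degree-n component of grann N:  { r | r x^n annihilates N } *)
Definition grann_comp (G : lmodType R) (xF : G -> G) (N : G -> Prop) (n : nat)
  : R -> Prop := fun r => forall g, N g -> r *: iter n xF g = 0.

(* grann_{R[x,f]} N = b R[x,f]  (equality of graded left ideals, i.e. of
   every homogeneous component) *)
Definition grann_eq (G : lmodType R) (xF : G -> G) (N : G -> Prop) (b : R -> Prop)
  : Prop := forall (n : nat) (r : R), grann_comp xF N n r <-> b r.

Definition Rxf_morphism (G Q : lmodType R) (xG : G -> G) (xQ : Q -> Q)
  (pi : G -> Q) : Prop :=
  (forall g h, pi (g + h) = pi g + pi h) /\
  (forall (r : R) g, pi (r *: g) = r *: pi g) /\
  (forall g, pi (xG g) = xQ (pi g)).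

Definition is_quotient_by (p : nat) (G Q : lmodType R) (xG : G -> G) (xQ : Q -> Q)
  (pi : G -> Q) (L : G -> Prop) : Prop :=
  frob_skew_action p xQ /\ Rxf_morphism xG xQ pi /\
  (forall q, exists g, pi g = q) /\ (forall g, pi g = 0 <-> L g).

End Defs.

(* Main.v *)
Require Import Defs.
From HB Require Import structures.
From mathcomp Require Import all_boot all_order all_algebra.
From Stdlib Require Import Classical.
Import GRing.Theory.
Local Open Scope ring_scope.

Lemma iterZ (R : comNzRingType) (p : nat) (G : lmodType R) (xF : G -> G)
  (hG : frob_skew_action p xF) n (r : R) g :
  iter n xF (r *: g) = r ^+ (p ^ n) *: iter n xF g.
Proof.
elim: n => [|n IH] /=; first by rewrite ?expn0 expr1.
by rewrite IH hG.2 -exprM -expnSr.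
Qed.

Theorem theorem3p6
  (R : comNzRingType) (p : nat)
  (hnoeth : noetherian_ring R) (hchar : p \in [pchar R])
  (G : lmodType R) (xF : G -> G)
  (hG : frob_skew_action p xF) (htf : x_torsion_free xF)
  (b : R -> Prop) (hb : is_ideal b)
  (hgrN : grann_eq xF (ann_bRxf xF b) b)
  (hN0 : exists g, ann_bRxf xF b g /\ g <> 0)
  (t : nat) (P : 'I_t -> R -> Prop)
  (hP : forall i, is_prime_ideal (P i))
  (hbP : forall r, b r <-> (forall i, P i r))
  (hirr : forall i, ~ (forall r, (forall j, j != i -> P j r) -> P i r))
  (ht : (1 < t)%N)
  (U V : {set 'I_t})
  (hUV : U :|: V = [set: 'I_t]) (hUVd : U :&: V = set0)
  (hU : U != set0) (hV : V != set0) :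
  let N := ann_bRxf xF b in
  let a := fun r : R => forall i, i \in U -> P i r in
  let c := fun r : R => forall i, i \in V -> P i r in
  let L := ann_bRxf xF a in
  (* (i) 0 < L < N *)
  ((exists g, L g /\ g <> 0) /\ (forall g, L g -> N g) /\ (exists g, N g /\ ~ L g)) /\
  (* (ii) in G/L: N/L = ann_{G/L}(c R[x,f]) and grann (N/L) = c R[x,f] *)
  (forall (Q : lmodType R) (xQ : Q -> Q) (pi : G -> Q),
     is_quotient_by p xF xQ pi L ->
     (forall q, (exists g, N g /\ pi g = q) <-> ann_bRxf xQ c q) /\
     grann_eq xQ (fun q => exists g, N g /\ pi g = q) c) /\
  (* (iii) grann L = a R[x,f] *)
  grann_eq xF L a.
Proof.
move=> N a c L.
have pgt1 : (1 < p)%N by apply: prime_gt1; apply: (pcharf_prime hchar).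
have pgt0 : (0 < p)%N by apply: ltnW.
have sep : forall i, exists s, (forall j, j != i -> P j s) /\ ~ P i s.
  move=> i; apply: NNPP => H; apply: (hirr i) => r Hr.
  apply: NNPP => Hn; apply: H; by exists r.
have idl : forall i x y, P i y -> P i (x * y).
  by move=> i x y Hy; case: (hP i) => [[_ [_ H]] _]; apply: H.
have idr : forall i x y, P i x -> P i (x * y).
  by move=> i x y Hx; rewrite mulrC; apply: idl.
have powP : forall i s k, ~ P i s -> ~ P i (s ^+ k).
  move=> i s k Hs; elim: k => [|k IH].
    by rewrite expr0; case: (hP i) => _ [].
  rewrite exprS => /((hP i).2.2) [] //.
have powP' : forall i s k, P i s -> (0 < k)%N -> P i (s ^+ k).
  by move=> i s [|k] // Hs _; rewrite exprSr; apply: idl.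
have inUV : forall i, i \in U \/ i \in V.
  move=> i; have : i \in U :|: V by rewrite hUV inE.
  by rewrite inE => /orP [] ?; [left|right].
have notUV : forall i, i \in U -> i \in V -> False.
  move=> i iU iV; have : i \in U :&: V by rewrite inE iU iV.
  by rewrite hUVd inE.
have bac : forall r, a r -> c r -> b r.
  move=> r ar cr; apply/hbP => i; case: (inUV i) => ?; [exact: ar | exact: cr].
have ba : forall r, b r -> a r by move=> r /hbP br i _; apply: br.
have bc : forall r, b r -> c r by move=> r /hbP br i _; apply: br.
have sepc : forall i, i \in U -> exists s, c s /\ ~ P i s.
  move=> i iU; case: (sep i) => s [Hs Hn]; exists s; split => // j jV.
  apply: Hs; apply/negP => /eqP ji; subst j; exact: notUV iU jV.
have sepa : forall i, i \in V -> exists s, a s /\ ~ P i s.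
  move=> i iV; case: (sep i) => s [Hs Hn]; exists s; split => // j jU.
  apply: Hs; apply/negP => /eqP ji; subst j; exact: notUV jU iV.
have Niter : forall g n, N g -> N (iter n xF g).
  by move=> g n Ng k r br; rewrite -iterD; apply: Ng.
have Nmul : forall g s r, N g -> a s -> c r -> forall n, s *: iter n xF (r *: g) = 0.
  move=> g s r Ng sa rc n; rewrite (@iterZ _ _ _ _ hG) scalerA; apply: Ng; apply: bac.
    by move=> i iU; apply: idr; apply: sa.
  move=> i iV; apply: idl; apply: powP'; first by apply: rc.
  by rewrite expn_gt0 pgt0.
have Nmul' : forall g s r m n, N g -> a s -> c r -> s *: iter m xF (r *: iter n xF g) = 0.
  by move=> g s r m n Ng sa rc; apply: Nmul => //; apply: Niter.
have nb : forall i s, ~ P i s -> ~ b s by move=> i s Hn /hbP; auto.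
split; [split; [|split]|split].
- case/set0Pn: hU => i iU; case: (sepc i iU) => s [sc sn].
  have : ~ (forall g, N g -> s *: iter 0 xF g = 0).
    by move=> H; apply: (nb i s sn); apply/(hgrN 0).
  move=> H; apply: NNPP => H'; apply: H => g Ng /=; apply: NNPP => gn.
  apply: H'; exists (s *: g); split => // n r ra; exact: Nmul.
- by move=> g Lg n r br; apply: Lg; apply: ba.
- apply: NNPP => H; case/set0Pn: hV => i iV; case: (sepa i iV) => s [sa sn].
  apply: (nb i s sn); apply/(hgrN 0) => g Ng /=.
  have Lg : L g by apply: NNPP => Lg; apply: H; exists g.
  exact: (Lg 0%N s sa).
- move=> Q xQ pi [hQ [[pa [pz px]] [psurj pker]]].
  have piiter : forall n g, pi (iter n xF g) = iter n xQ (pi g).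
    by elim=> [|n IH] g //=; rewrite px IH.
  have claim1 : forall q, (exists g, N g /\ pi g = q) <-> ann_bRxf xQ c q.
    move=> q; split.
      case=> g [Ng <-] n r cr; rewrite -piiter -pz; apply/pker => m s sa.
      exact: Nmul'.
    case: (psurj q) => g <- H; exists g; split => // n r' br'.
    have key : forall k s r, a s -> c r -> s *: (r *: iter k xF g) = 0.
      move=> k s r sa rc.
      have : L (r *: iter k xF g) by apply/pker; rewrite pz piiter; apply: H.
      by move=> Lk; apply: (Lk 0%N s sa).
    apply: htf; rewrite hG.2 -iterS.
    have -> : r' ^+ p = r' ^+ p.-1 * r' by rewrite -exprSr prednK.
    rewrite -scalerA; apply: key; last exact: bc.
    move=> i iU; apply: powP'; first by apply: (ba _ br').
    by rewrite -ltnS prednK.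
  split => //.
  move=> n r; split; last first.
    by move=> rc q /claim1 H; apply: H.
  move=> H i iV; case: (sepa i iV) => s [sa sn].
  have : b (s * r).
    apply/(hgrN n) => g Ng; rewrite -scalerA.
    have : L (r *: iter n xF g).
      by apply/pker; rewrite pz piiter; apply: H; exists g.
    by move=> Lg; apply: (Lg 0%N s sa).
  by move/hbP => /(_ i) /((hP i).2.2) [].
- move=> n r; split; last by move=> ra g Lg; apply: Lg.
  move=> H i iU; case: (sepc i iU) => s [sc sn].
  have : b (r * s ^+ (p ^ n)).
    apply/(hgrN n) => g Ng; rewrite -scalerA -(@iterZ _ _ _ _ hG); apply: H.
    by move=> m s' s'a; apply: Nmul.
  move/hbP => /(_ i) /((hP i).2.2) [] // /(powP i s _ sn) [].
Qed.
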